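(* A $\lambda$-term $M$ is in $\mathsf v$-normal form if and only if $M$ is a $G$-term generated by the following grammar (with $k\ge0$): $G::=H\mid R$; $H::=x\mid\lambda x.G\mid xHG_1\cdots G_k$; $R::=(\lambda x.G)(yHG_1\cdots G_k)$.
   Context: $\lambda$-terms and values are $M,N::=V\mid MN$, $V::=x\mid\lambda x.M$ (application associates to the left), up to $\alpha$-conversion. Rules: $(\beta_v)$ $(\lambda x.M)V\to M\{x:=V\}$ if $V$ is a value; $(\sigma_1)$ $(\lambda x.M)NP\to(\lambda x.MP)N$ if $x\notin\mathrm{FV}(P)$; $(\sigma_3)$ $V((\lambda x.M)N)\to(\lambda x.VM)N$ if $V$ is a value and $x\notin\mathrm{FV}(V)$. $\to_{\mathsf v}$ is the contextual closure of their union; $M$ is in $\mathsf v$-normal form if there is no $N$ with $M\to_{\mathsf v}N$. *)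

(* Defs.v *)
(* Lambda-terms up to alpha-conversion, via de Bruijn indices. *)
From Stdlib Require Import Arith.

Inductive term : Type :=
| Var : nat -> term
| Lam : term -> term
| App : term -> term -> term.

Definition is_value (t : term) : Prop :=
  match t with Var _ | Lam _ => True | App _ _ => False end.

Fixpoint lift (k c : nat) (t : term) : term :=
  match t with
  | Var n => if n <? c then Var n else Var (n + k)
  | Lam u => Lam (lift k (S c) u)
  | App u v => App (lift k c u) (lift k c v)
  end.

Fixpoint subst (j : nat) (s : term) (t : term) : term :=
  match t with
  | Var n => if n =? j then lift j 0 s
             else if j <? n then Var (pred n) else Var n
  | Lam u => Lam (subst (S j) s u)
  | App u v => App (subst j s u) (subst j s v)
  end.

(* One step of ->_v : contextual closure of beta_v, sigma_1, sigma_3.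
   The freshness side conditions of sigma_1 / sigma_3 are realized by
   lifting P (resp. V) under the new binder. *)
Inductive step : term -> term -> Prop :=
| step_betav : forall M V, is_value V ->
    step (App (Lam M) V) (subst 0 V M)
| step_sigma1 : forall M N P,
    step (App (App (Lam M) N) P) (App (Lam (App M (lift 1 0 P))) N)
| step_sigma3 : forall V M N, is_value V ->
    step (App V (App (Lam M) N)) (App (Lam (App (lift 1 0 V) M)) N)
| step_lam : forall M M', step M M' -> step (Lam M) (Lam M')
| step_appl : forall M M' N, step M M' -> step (App M N) (App M' N)
| step_appr : forall M N N', step N N' -> step (App M N) (App M N').

Definition v_normal (M : term) : Prop := ~ exists N, step M N.

(* Grammar: G ::= H | R ; H ::= x | \x.G | x H G_1 ... G_k ;
   R ::= (\x.G)(y H G_1 ... G_k), k >= 0.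
   is_sp t : t is of the form  x H G_1 ... G_k  (k >= 0). *)
Inductive is_G : term -> Prop :=
| G_H : forall t, is_H t -> is_G t
| G_R : forall t, is_R t -> is_G t
with is_H : term -> Prop :=
| H_var : forall n, is_H (Var n)
| H_lam : forall g, is_G g -> is_H (Lam g)
| H_sp : forall t, is_sp t -> is_H t
with is_R : term -> Prop :=
| R_intro : forall g t, is_G g -> is_sp t -> is_R (App (Lam g) t)
with is_sp : term -> Prop :=
| sp_base : forall n h, is_H h -> is_sp (App (Var n) h)
| sp_app : forall t g, is_sp t -> is_G g -> is_sp (App t g).

(* Main.v *)
Require Import Defs.

Scheme is_G_m := Induction for is_G Sort Prop
with is_H_m := Induction for is_H Sort Prop
with is_R_m := Induction for is_R Sort Prop
with is_sp_m := Induction for is_sp Sort Prop.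
Combined Scheme all_m from is_G_m, is_H_m, is_R_m, is_sp_m.

Definition nlh (t : term) : Prop :=
  match t with App (Lam _) _ => False | App _ _ => True | _ => False end.
Definition nlamapp (t : term) : Prop :=
  match t with App (Lam _) _ => False | _ => True end.

Lemma var_normal n : v_normal (Var n).
Proof. intros [N HN]. inversion HN. Qed.

Lemma nf_app u v : v_normal (App u v) -> v_normal u /\ v_normal v.
Proof.
  intros H; split; intros [N HN]; apply H; eauto using step.
Qed.

Lemma nf_lam u : v_normal (Lam u) -> v_normal u.
Proof. intros H [N HN]; apply H; eauto using step. Qed.

Lemma G_normal_all :
  (forall t, is_G t -> v_normal t) /\
  (forall t, is_H t -> v_normal t /\ nlamapp t) /\
  (forall t, is_R t -> v_normal t) /\
  (forall t, is_sp t -> v_normal t /\ nlh t).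
Proof.
  apply (all_m (fun t _ => v_normal t) (fun t _ => v_normal t /\ nlamapp t)
    (fun t _ => v_normal t) (fun t _ => v_normal t /\ nlh t)); simpl.
  - intros t _ [A _]; exact A.
  - intros t _ A; exact A.
  - intros n; split; [apply var_normal | exact I].
  - intros g _ A; split; [intros [N HN]; inversion HN; subst; apply A; eauto | exact I].
  - intros t _ [A B]; split; [exact A | destruct t as [ | | [] ]; simpl in *; tauto].
  - intros g t _ A _ [B C]; intros [N HN]; inversion HN; subst.
    + destruct t; simpl in *; tauto.
    + simpl in C; tauto.
    + match goal with Hs : step (Lam _) _ |- _ => inversion Hs; subst end; apply A; eauto.
    + apply B; eauto.
  - intros n h _ [A B]; split; [|exact I]; intros [N HN]; inversion HN; subst.
    + simpl in B; tauto.
    + match goal with Hs : step (Var _) _ |- _ => inversion Hs end.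
    + apply A; eauto.
  - intros t g i0 [A B] i1 C; split; [|destruct t as [ | | ]; simpl in *; tauto].
    intros [N HN]; inversion HN; subst; try (simpl in B; tauto); try (destruct t as [ | | t1 t2]; simpl in *; try destruct t1; simpl in *; tauto).
    + apply A; eauto.
    + apply C; eauto.
Qed.

Lemma normal_G M : v_normal M -> is_G M.
Proof.
  induction M as [n|M IH|M IHM N IHN]; intros H.
  - apply G_H, H_var.
  - apply G_H, H_lam, IH, nf_lam, H.
  - destruct (nf_app _ _ H) as [HM HN].
    specialize (IHM HM); specialize (IHN HN).
    destruct M as [n|g|P Q].
    + apply G_H, H_sp. inversion IHN; subst.
      * apply sp_base; auto.
      * exfalso. inversion H0; subst. apply H. eexists. apply step_sigma3. exact I.
    + assert (Hg : is_G g).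
      { inversion IHM; subst.
        - inversion H0; subst; auto. inversion H1.
        - inversion H0. }
      inversion IHN; subst.
      * inversion H0; subst.
        -- exfalso; apply H; eexists; apply step_betav; exact I.
        -- exfalso; apply H; eexists; apply step_betav; exact I.
        -- apply G_R, R_intro; auto.
      * exfalso. inversion H0; subst. apply H. eexists. apply step_sigma3. exact I.
    + inversion IHM; subst.
      * inversion H0; subst. apply G_H, H_sp, sp_app; auto.
      * exfalso. inversion H0; subst. apply H. eexists. apply step_sigma1.
Qed.

Theorem lemma1p7 : forall M : term, v_normal M <-> is_G M.
Proof.
  intros M; split.
  - apply normal_G.
  - apply G_normal_all.
Qed.
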